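(* Let $\mathcal{C}$ be a partition of a finite set $E$ (a covering by pairwise disjoint nonempty sets). Then $SH$, $XH$, $VH$ are closure operators of matroids on $E$, and $\mathcal{I}_{SH}(\mathcal{C})=\mathcal{I}_{XH}(\mathcal{C})=\mathcal{I}_{VH}(\mathcal{C})=\mathcal{I}(\mathcal{C})$ and $\mathcal{L}_{SH}(M(\mathcal{C}))=\mathcal{L}_{XH}(M(\mathcal{C}))=\mathcal{L}_{VH}(M(\mathcal{C}))=\mathcal{L}(M(\mathcal{C}))$.
   Context: For a covering $\mathcal{C}$ of $E$ and $x\in E$: $N(x)=\bigcap\{K\in\mathcal{C}:x\in K\}$. For $X\subseteq E$: $SH(X)=\bigcup\{K\in\mathcal{C}:K\cap X\neq\emptyset\}$, $XH(X)=\{x:N(x)\cap X\neq\emptyset\}$, $VH(X)=\bigcup\{N(x):N(x)\cap X\neq\emptyset\}$. When $H\in\{SH,XH,VH\}$ is the closure operator of a matroid on $E$, $\mathcal{I}_H(\mathcal{C})=\{I\subseteq E:x\notin H(I-\{x\})\ \forall x\in I\}$ is its family of independent sets and $\mathcal{L}_H(M(\mathcal{C}))=\{X:H(X)=X\}$ its set of closed sets. $\mathcal{I}(\mathcal{C})$ is the family of partial transversals of $\mathcal{C}$ (sets of distinct elements $e_1,\dots,e_k$ with $e_j\in K_{i_j}$ for distinct blocks $K_{i_1},\dots,K_{i_k}$), i.e. the independent sets of the transversal matroid $M(\mathcal{C})$, and $\mathcal{L}(M(\mathcal{C}))$ is the set of closed sets of $M(\mathcal{C})$, where $cl(X)=\{a:r(X\cup\{a\})=r(X)\}$.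 *)

(* Defs.v *)
From mathcomp Require Import all_boot.
Set Implicit Arguments. Unset Strict Implicit. Unset Printing Implicit Defensive.

Section Defs.
Variable T : finType.
Variable C : {set {set T}}.

Definition Nb (x : T) : {set T} := \bigcap_(K in C | x \in K) K.

Definition SH (X : {set T}) : {set T} :=
  \bigcup_(K in C | [exists y, (y \in K) && (y \in X)]) K.

Definition XH (X : {set T}) : {set T} :=
  [set x | [exists y, (y \in Nb x) && (y \in X)]].

Definition VH (X : {set T}) : {set T} :=
  \bigcup_(x | [exists y, (y \in Nb x) && (y \in X)]) Nb x.

Definition ptrans (I : {set T}) : bool :=
  [exists f : {ffun T -> {set T}},
     [forall x in I, (f x \in C) && (x \in f x)] &&
     [forall x in I, forall y in I, (f x == f y) ==> (x == y)]].

Definition Itrans : {set {set T}} := [set I | ptrans I].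

Definition trank (X : {set T}) : nat :=
  \max_(I : {set T} | (I \subset X) && ptrans I) #|I|.

Definition tcl (X : {set T}) : {set T} :=
  [set a | trank (a |: X) == trank X].

Definition Ltrans : {set {set T}} := [set X | tcl X == X].

End Defs.

Section Closure.
Variable T : finType.

Definition matroid_closure (H : {set T} -> {set T}) : Prop :=
  [/\ forall X : {set T}, X \subset H X,
      forall X Y : {set T}, X \subset Y -> H X \subset H Y,
      forall X : {set T}, H (H X) = H X &
      forall (X : {set T}) (x y : T), y \in H (x |: X) -> y \notin H X -> x \in H (y |: X)].

Definition IH (H : {set T} -> {set T}) : {set {set T}} :=
  [set I : {set T} | [forall x in I, x \notin H (I :\ x)]].

Definition LH (H : {set T} -> {set T}) : {set {set T}} :=
  [set X : {set T} | H X == X].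
End Closure.

(* Main.v *)
Require Import Defs.
From mathcomp Require Import all_boot.
Set Implicit Arguments. Unset Strict Implicit. Unset Printing Implicit Defensive.

Section Aux.
Variable T : finType.
Variable C : {set {set T}}.
Hypothesis hP : partition C [set: T].

Let hT : trivIset C. Proof. by case/and3P: hP. Qed.
Let hcov (x : T) : x \in cover C.
Proof. by case/and3P: hP => /eqP -> _ _; rewrite inE. Qed.

Definition Hp (X : {set T}) : {set T} := [set x | pblock C x \in pblock C @: X].

Lemma memx x : x \in pblock C x. Proof. by rewrite mem_pblock hcov. Qed.
Lemma pbE x z : (z \in pblock C x) = (pblock C x == pblock C z).
Proof. by rewrite eq_pblock. Qed.
Lemma pbK K x : K \in C -> x \in K -> pblock C x = K.
Proof. by move=> hK hx; apply: def_pblock. Qed.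

Lemma NbE x : Nb C x = pblock C x.
Proof.
apply/setP=> y; apply/bigcapP/idP.
- by move=> H; apply: H; rewrite memx pblock_mem ?hcov.
- by move=> hy K /andP [hK hx]; rewrite -(pbK hK hx).
Qed.

Lemma HpP (X : {set T}) x : reflect (exists2 z, z \in X & pblock C x = pblock C z) (x \in Hp X).
Proof. by rewrite inE; apply: (iffP imsetP). Qed.

Lemma SHE X : SH C X = Hp X.
Proof.
apply/setP=> y; apply/bigcupP/HpP.
- move=> [K /andP [hK /existsP [z /andP [zK zX]]] yK].
  by exists z => //; rewrite (pbK hK yK) (pbK hK zK).
- move=> [z zX e]; exists (pblock C y) => //.
  rewrite pblock_mem ?hcov ?memx //=; apply/existsP; exists z; rewrite zX andbT.
  by rewrite e memx.
by rewrite memx.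
Qed.

Lemma XHE X : XH C X = Hp X.
Proof.
apply/setP=> x; rewrite inE; apply/existsP/HpP.
- move=> [z /andP [zN zX]]; exists z => //; apply/eqP; by rewrite -pbE -NbE.
- move=> [z zX e]; exists z; rewrite zX andbT NbE pbE e //.
Qed.

Lemma VHE X : VH C X = Hp X.
Proof.
apply/setP=> y; apply/bigcupP/HpP.
- move=> [x /existsP [z /andP [zN zX]] yN]; exists z => //.
  move: zN yN; rewrite !NbE !pbE => /eqP <- /eqP -> //.
- move=> [z zX e]; exists y; last by rewrite NbE memx.
  by apply/existsP; exists z; rewrite zX andbT NbE pbE e.
Qed.

Lemma mcHp : matroid_closure Hp.
Proof.
split.
- by move=> X; apply/subsetP=> x xX; apply/HpP; exists x.
- move=> X Y /subsetP sXY; apply/subsetP=> x /HpP [z zX e]; apply/HpP; exists z => //.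
  exact: sXY.
- move=> X; apply/setP=> x; apply/HpP/HpP.
  + by move=> [z /HpP [w wX e2] e]; exists w => //; rewrite e.
  + by move=> [z zX e]; exists x => //; apply/HpP; exists z.
- move=> X x y; rewrite !inE !imsetU1 => /setU1P [e|] //; last by move=> ->.
  by move=> _; apply/setU1P; left.
Qed.

Lemma mc_ext H : (forall X, H X = Hp X) -> matroid_closure H.
Proof.
move=> E; have := mcHp; case=> a b c d; split.
- by move=> X; rewrite E.
- by move=> X Y s; rewrite !E; apply: b.
- by move=> X; rewrite !E.
- by move=> X x y; rewrite !E; apply: d.
Qed.

Lemma IH_ext H : (forall X, H X = Hp X) -> IH H = IH Hp.
Proof. by move=> E; apply/setP=> I; rewrite !inE; apply/eq_forallb=> x; rewrite E. Qed.
Lemma LH_ext H : (forall X, H X = Hp X) -> LH H = LH Hp.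
Proof. by move=> E; apply/setP=> I; rewrite !inE E. Qed.

Lemma ptransP (I : {set T}) : reflect {in I &, injective (pblock C)} (ptrans C I).
Proof.
apply: (iffP existsP).
- move=> [f /andP [/forall_inP h1 /forall_inP h2]] x y xI yI e.
  have /andP [fx xf] := h1 x xI; have /andP [fy yf] := h1 y yI.
  apply/eqP; move: (h2 x xI) => /forall_inP /(_ y yI) /implyP; apply.
  by rewrite -(pbK fx xf) -(pbK fy yf) e.

- move=> inj; exists [ffun x => pblock C x]; apply/andP; split.
  + by apply/forall_inP=> x _; rewrite ffunE pblock_mem ?hcov ?memx.
  + apply/forall_inP=> x xI; apply/forall_inP=> y yI; rewrite !ffunE.
    by apply/implyP=> /eqP e; apply/eqP; apply: inj.
Qed.

Lemma IHp : IH Hp = Itrans C.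
Proof.
apply/setP=> I; rewrite !inE; apply/forall_inP/ptransP.
- move=> h x y xI yI e; apply/eqP; apply/negPn/negP => nxy.
  have := h x xI; rewrite inE => /imsetP; apply; exists y => //.
  by rewrite !inE eq_sym nxy.
- move=> inj x xI; rewrite inE; apply/imsetP=> [[y]]; rewrite !inE => /andP [nyx yI] e.
  by move: nyx; rewrite (inj x y xI yI e) eqxx.
Qed.

Definition rep (X : {set T}) (y : T) := odflt y [pick z in X :&: pblock C y].

Lemma repP (X : {set T}) (y : T) : y \in X -> (rep X y \in X) /\ pblock C (rep X y) = pblock C y.
Proof.
move=> yX; rewrite /rep; case: pickP => [z|H] /=.
- rewrite !inE => /andP [zX zp]; split=> //; apply/esym/eqP; by rewrite -pbE.
- by move: (H y); rewrite !inE yX memx.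
Qed.

Lemma rep_eq (X : {set T}) (y y' : T) : y \in X -> y' \in X -> pblock C y = pblock C y' -> rep X y = rep X y'.
Proof.
move=> yX y'X e; rewrite /rep e; case: pickP => [z|H] //=.
by move: (H y); rewrite !inE yX -e memx.
Qed.

Lemma trankE (X : {set T}) : trank C X = #|pblock C @: X|.
Proof.
apply/eqP; rewrite eqn_leq; apply/andP; split.
- apply/bigmax_leqP=> I /andP [sIX /ptransP inj].
  by rewrite -(card_in_imset inj); apply: subset_leq_card; apply: imsetS.
- set I := rep X @: X.
  have sIX : I \subset X by apply/subsetP=> z /imsetP [y yX ->]; case: (repP yX).
  have inj : {in I &, injective (pblock C)}.
    move=> a b /imsetP [y yX ->] /imsetP [y' y'X ->].
    case: (repP yX) => _ ->; case: (repP y'X) => _ ->; exact: rep_eq.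
  have -> : pblock C @: X = pblock C @: I.
    rewrite /I -imset_comp; apply: eq_in_imset => y yX /=.
    by case: (repP yX) => _ ->.
  rewrite (card_in_imset inj).
  have hI : (I \subset X) && ptrans C I by rewrite sIX; apply/ptransP.
  rewrite /trank; exact: (@leq_bigmax_cond _ (fun J : {set T} => (J \subset X) && ptrans C J) (fun J : {set T} => #|J|) I hI).
Qed.

Lemma tclE (X : {set T}) : tcl C X = Hp X.
Proof.
apply/setP=> a; rewrite !inE !trankE imsetU1 cardsU1.
case: (pblock C a \in _) => /=; first by rewrite add0n eqxx.
by apply/negbTE; rewrite add1n neq_ltn ltnSn orbT.
Qed.

Lemma LHp : LH Hp = Ltrans C.
Proof. by apply/setP=> X; rewrite !inE tclE. Qed.

End Aux.

Theorem theorem13 (T : finType) (C : {set {set T}}) :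
  partition C [set: T] ->
  [/\ matroid_closure (SH C), matroid_closure (XH C), matroid_closure (VH C),
      [/\ IH (SH C) = IH (XH C), IH (XH C) = IH (VH C) & IH (VH C) = Itrans C] &
      [/\ LH (SH C) = LH (XH C), LH (XH C) = LH (VH C) & LH (VH C) = Ltrans C]].
Proof.
move=> hP.
have eS := SHE hP; have eX := XHE hP; have eV := VHE hP.
split; try exact: mc_ext.
- by rewrite (IH_ext eS) (IH_ext eX) (IH_ext eV) IHp.
- by rewrite (LH_ext eS) (LH_ext eX) (LH_ext eV) LHp.
Qed.
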